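(* Suppose Assumption A holds. If the quadratic eigenvalue multiplicity $k$ satisfies $k\ge m+2$, then $\operatorname{conv}(\mathcal D)=\mathcal D_{\mathrm{SDP}}$.
   Context: Fix integers $N\ge 1$, $m_I,m_E\ge 0$, $m:=m_I+m_E\ge 1$; $[a,b]=\{a,\dots,b\}$, $[n]=[1,n]$. For $i\in[0,m]$ let $q_i(x)=x^\top A_ix+2b_i^\top x+c_i$ with $A_i\in\mathbb S^N$, $b_i\in\mathbb R^N$, $c_i\in\mathbb R$. $\mathcal D:=\{(x,t)\in\mathbb R^N\times\mathbb R: q_0(x)\le 2t,\ q_i(x)\le0\ \forall i\in[m_I],\ q_i(x)=0\ \forall i\in[m_I+1,m]\}$. Let $Q_i=\begin{pmatrix}c_i& b_i^\top\\ b_i& A_i\end{pmatrix}$; $\mathcal D_{\mathrm{SDP}}:=\{(x,t):\exists X\in\mathbb S^N$ with $Y=\begin{pmatrix}1&x^\top\\ x& X\end{pmatrix}\succeq0$, $\langle Q_0,Y\rangle\le 2t$, $\langle Q_i,Y\rangle\le 0\ \forall i\in[m_I]$, $\langle Q_i,Y\rangle= 0\ \forall i\in[m_I+1,m]\}$. $A(\gamma)=A_0+\sum_{i=1}^m\gamma_iA_i$. Assumption A: the QCQP feasible set $\{x: q_i(x)\le0\ \forall i\in[m_I],\ q_i(x)=0\ \forall i\in[m_I+1,m]\}$ is nonempty and some $\gamma^*\in\mathbb R^m$ with $\gamma^*_i\ge0$ ($i\in[m_I]$) has $A(\gamma^* )\succ0$. The quadratic eigenvalue multiplicity is the largest integer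 $k$ (with $N=nk$) such that for every $i\in[0,m]$ there is $\mathcal A_i\in\mathbb S^n$ with $A_i=I_k\otimes\mathcal A_i$. *)

(* Defs.v *)
From HB Require Import structures.
From mathcomp Require Import all_boot all_order all_algebra.
Set Implicit Arguments. Unset Strict Implicit. Unset Printing Implicit Defensive.
Import Order.TTheory GRing.Theory Num.Theory.
Local Open Scope ring_scope.

Section Defs.
Variable R : rcfType.

Definition symmx n (M : 'M[R]_n) : Prop := M^T = M.

Definition psd n (M : 'M[R]_n) : Prop :=
  symmx M /\ forall v : 'cV[R]_n, 0 <= (v^T *m M *m v) 0 0.

Definition pd n (M : 'M[R]_n) : Prop :=
  symmx M /\ forall v : 'cV[R]_n, v != 0 -> 0 < (v^T *m M *m v) 0 0.

Definition frob n (P Q : 'M[R]_n) : R := \tr (P^T *m Q).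

Definition kron m1 n1 m2 n2 (A : 'M[R]_(m1, n1)) (B : 'M[R]_(m2, n2))
  : 'M[R]_(m1 * m2, n1 * n2) :=
  \matrix_(i, j) \sum_(a < m1) \sum_(b < m2) \sum_(c < n1) \sum_(d < n2)
     (if ((i == a * m2 + b :> nat) && (j == c * n2 + d :> nat))%N
      then A a c * B b d else 0).

Definition quad N (A : 'M[R]_N) (b : 'cV[R]_N) (c : R) (x : 'cV[R]_N) : R :=
  (x^T *m A *m x) 0 0 + 2 * (b^T *m x) 0 0 + c.

Definition Qmat N (A : 'M[R]_N) (b : 'cV[R]_N) (c : R) : 'M[R]_(1 + N) :=
  block_mx c%:M b^T b A.

Definition Ymat N (x : 'cV[R]_N) (X : 'M[R]_N) : 'M[R]_(1 + N) :=
  block_mx 1%:M x^T x X.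

(* Constraint data: index 0 is the objective, indices 1..mI are inequality
   constraints and mI+1..mI+mE are equality constraints; m = mI + mE. *)

Definition feas N (m mI : nat) (A : 'I_m.+1 -> 'M[R]_N) (b : 'I_m.+1 -> 'cV[R]_N)
  (c : 'I_m.+1 -> R) (x : 'cV[R]_N) : Prop :=
  (forall i : 'I_m.+1, (0 < i <= mI)%N -> quad (A i) (b i) (c i) x <= 0) /\
  (forall i : 'I_m.+1, (mI < i)%N -> quad (A i) (b i) (c i) x = 0).

Definition D_QCQP N (m mI : nat) (A : 'I_m.+1 -> 'M[R]_N) (b : 'I_m.+1 -> 'cV[R]_N)
  (c : 'I_m.+1 -> R) (x : 'cV[R]_N) (t : R) : Prop :=
  quad (A 0) (b 0) (c 0) x <= 2 * t /\ feas mI A b c x.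

Definition D_SDP N (m mI : nat) (A : 'I_m.+1 -> 'M[R]_N) (b : 'I_m.+1 -> 'cV[R]_N)
  (c : 'I_m.+1 -> R) (x : 'cV[R]_N) (t : R) : Prop :=
  exists X : 'M[R]_N, symmx X /\ psd (Ymat x X) /\
    frob (Qmat (A 0) (b 0) (c 0)) (Ymat x X) <= 2 * t /\
    (forall i : 'I_m.+1, (0 < i <= mI)%N -> frob (Qmat (A i) (b i) (c i)) (Ymat x X) <= 0) /\
    (forall i : 'I_m.+1, (mI < i)%N -> frob (Qmat (A i) (b i) (c i)) (Ymat x X) = 0).

Definition convhull N (S : 'cV[R]_N -> R -> Prop) (x : 'cV[R]_N) (t : R) : Prop :=
  exists (p : nat) (l : 'I_p -> R) (xs : 'I_p -> 'cV[R]_N) (ts : 'I_p -> R),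
    (forall j, 0 <= l j) /\ \sum_(j < p) l j = 1 /\ (forall j, S (xs j) (ts j)) /\
    x = \sum_(j < p) l j *: xs j /\ t = \sum_(j < p) l j * ts j.

(* A(gamma) = A_0 + sum_{i=1}^m gamma_i A_i  (gamma indexed from 0) *)
Definition Agamma N (m : nat) (A : 'I_m.+1 -> 'M[R]_N) (g : 'I_m -> R) : 'M[R]_N :=
  A 0 + \sum_(i < m) g i *: A (lift ord0 i).

Definition assumptionA N (m mI : nat) (A : 'I_m.+1 -> 'M[R]_N) (b : 'I_m.+1 -> 'cV[R]_N)
  (c : 'I_m.+1 -> R) : Prop :=
  (exists x, feas mI A b c x) /\
  exists g : 'I_m -> R, (forall i : 'I_m, (i < mI)%N -> 0 <= g i) /\ pd (Agamma A g).

Definition has_mult N (m : nat) (A : 'I_m.+1 -> 'M[R]_N) (k : nat) : Prop :=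
  exists (n : nat) (e : (k * n)%N = N) (cA : 'I_m.+1 -> 'M[R]_n),
    forall i, symmx (cA i) /\ A i = castmx (e, e) (kron (1%:M : 'M[R]_k) (cA i)).

Definition qe_mult N (m : nat) (A : 'I_m.+1 -> 'M[R]_N) (k : nat) : Prop :=
  has_mult A k /\ forall k', has_mult A k' -> (k' <= k)%N.

End Defs.

(* Main.v *)
Require Import Defs.
From HB Require Import structures.
From mathcomp Require Import all_boot all_order all_algebra ring lra.
Set Implicit Arguments. Unset Strict Implicit. Unset Printing Implicit Defensive.
Import Order.TTheory GRing.Theory Num.Theory.
Local Open Scope ring_scope.

Lemma idx_proof k n (a : 'I_k) (b : 'I_n) : (a * n + b < k * n)%N.
Proof.
have : (a * n + b < a * n + n)%N by rewrite ltn_add2l.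
move/leq_trans; apply; rewrite -mulSnr leq_mul2r ltn_ord orbT //.
Qed.

Definition idx k n (a : 'I_k) (b : 'I_n) : 'I_(k * n) := Ordinal (idx_proof a b).

Lemma idx_eqE k n (a a' : 'I_k) (b b' : 'I_n) :
  ((a * n + b)%N == (a' * n + b')%N) = (a == a') && (b == b').
Proof.
apply/eqP/andP => [H|[/eqP -> /eqP ->] //].
have n0 : (0 < n)%N by case: n b {H b'} => [[]|].
have Hd := congr1 (fun v => v %/ n)%N H.
have Hm := congr1 (fun v => v %% n)%N H.
rewrite /= !divnMDl // !divn_small ?ltn_ord // !addn0 in Hd.
rewrite /= !modnMDl !modn_small ?ltn_ord // in Hm.
by split; apply/eqP; apply: val_inj.
Qed.

Lemma sum_if_const (R : nmodType) I (r : seq I) (P : bool) (F : I -> R) :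
  \sum_(i <- r) (if P then F i else 0) = if P then \sum_(i <- r) F i else 0.
Proof. by case: P => //; rewrite big1. Qed.

Lemma collapse1 (R : nmodType) k n (F : 'I_k -> 'I_n -> R) (a : 'I_k) (b : 'I_n) :
  \sum_(a' < k) \sum_(b' < n)
     (if ((a * n + b)%N == (a' * n + b')%N) then F a' b' else 0) = F a b.
Proof.
under eq_bigr => a' _ do under eq_bigr => b' _ do rewrite idx_eqE.
rewrite (bigD1 a) //= [X in _ + X]big1 ?addr0; last first.
  by move=> a' Ha; apply: big1 => b' _; rewrite eq_sym (negPf Ha).
rewrite (bigD1 b) //= !eqxx [X in _ + X]big1 ?addr0 //.
by move=> b' Hb; rewrite eq_sym (negPf Hb).
Qed.

Lemma sum_idx (R : nmodType) k n (F : 'I_(k * n) -> R) :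
  \sum_(i < k * n) F i = \sum_(a < k) \sum_(b < n) F (idx a b).
Proof.
have E : forall i : 'I_(k * n), F i = \sum_(a < k) \sum_(b < n)
     (if ((val i) == (a * n + b)%N) then F (idx a b) else 0).
  move=> i.
  have n0 : (0 < n)%N by case: n i F => [|//]; rewrite muln0 => -[].
  have Ha : (i %/ n < k)%N by rewrite ltn_divLR // ltn_ord.
  have Hb : (i %% n < n)%N by rewrite ltn_pmod.
  have -> : val i = (Ordinal Ha * n + Ordinal Hb)%N by rewrite /= -divn_eq.
  rewrite (@collapse1 _ k n (fun a b => F (idx a b)) (Ordinal Ha) (Ordinal Hb)).
  by congr F; apply: val_inj; rewrite /= -divn_eq.
rewrite (eq_bigr _ (fun i _ => E i)) exchange_big /=.
apply: eq_bigr => a _; rewrite exchange_big /=; apply: eq_bigr => b _.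
rewrite (bigD1 (idx a b)) //= eqxx big1 ?addr0 // => i /negPf H.
by have -> : (val i == (a * n + b)%N) = false by rewrite -H.
Qed.

Lemma kron_idx (R : rcfType) m1 n1 m2 n2 (A : 'M[R]_(m1, n1)) (B : 'M[R]_(m2, n2))
  a b c d : kron A B (idx a b) (idx c d) = A a c * B b d.
Proof.
rewrite /kron mxE /=.
transitivity (\sum_(a' < m1) \sum_(b' < m2) (if (a * m2 + b == a' * m2 + b')%N then
   \sum_(c' < n1) \sum_(d' < n2) (if (c * n2 + d == c' * n2 + d')%N then A a' c' * B b' d' else 0)
   else 0)).
  apply: eq_bigr => a' _; apply: eq_bigr => b' _.
  case: (a * m2 + b == a' * m2 + b')%N => //=.
  by apply: big1 => c' _; apply: big1.
rewrite (collapse1 (fun a' b' => \sum_(c' < n1) \sum_(d' < n2) (if (c * n2 + d == c' * n2 + d')%N then A a' c' * B b' d' else 0))).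
exact: (collapse1 (fun c' d' => A a c' * B b d')).
Qed.

Definition blk (R : rcfType) k n (y : 'cV[R]_(k * n)) (a : 'I_k) : 'cV[R]_n :=
  \col_b y (idx a b) 0.

Lemma kron1_form (R : rcfType) k n (B : 'M[R]_n) (u w : 'cV[R]_(k * n)) :
  (u^T *m kron (1%:M : 'M[R]_k) B *m w) 0 0 =
  \sum_a ((blk u a)^T *m B *m blk w a) 0 0.
Proof.
rewrite mxE sum_idx.
apply: eq_bigr => a _; rewrite mxE; apply: eq_bigr => d _.
rewrite !mxE sum_idx; congr (_ * _).
rewrite (bigD1 a) //= [X in _ + X]big1 ?addr0; last first.
  move=> a0 Ha; apply: big1 => b _; rewrite kron_idx !mxE.
  by rewrite (negPf Ha) mulr0n mul0r mulr0.
by apply: eq_bigr => b _; rewrite kron_idx !mxE eqxx mul1r.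
Qed.

Definition zvec (R : rcfType) k n (e : 'rV[R]_k) (v : 'cV[R]_n) : 'cV[R]_(k * n) :=
  \col_i \sum_(a < k) \sum_(b < n)
     (if (val i == a * n + b)%N then e 0 a * v b 0 else 0).

Lemma zvec_idx (R : rcfType) k n (e : 'rV[R]_k) (v : 'cV[R]_n) a b :
  zvec e v (idx a b) 0 = e 0 a * v b 0.
Proof. by rewrite mxE /= (collapse1 (fun a b => e 0 a * v b 0)). Qed.

Lemma blk_zvec (R : rcfType) k n (e : 'rV[R]_k) (v : 'cV[R]_n) a :
  blk (zvec e v) a = e 0 a *: v.
Proof. by apply/colP => b; rewrite [LHS]mxE zvec_idx mxE. Qed.

Lemma zvec_lin (R : rcfType) k n (e : 'rV[R]_k) (v : 'cV[R]_n) (g : 'cV[R]_(k * n)) :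
  ((zvec e v)^T *m g) 0 0 = \sum_a e 0 a * (v^T *m blk g a) 0 0.
Proof.
rewrite mxE sum_idx; apply: eq_bigr => a _; rewrite mxE mulr_sumr.
by apply: eq_bigr => b _; rewrite [(zvec e v)^T _ _]mxE zvec_idx !mxE mulrA.
Qed.

Lemma zvec_quad (R : rcfType) k n (e : 'rV[R]_k) (v : 'cV[R]_n) (B : 'M[R]_n) :
  ((zvec e v)^T *m kron (1%:M : 'M[R]_k) B *m zvec e v) 0 0 =
  (e *m e^T) 0 0 * (v^T *m B *m v) 0 0.
Proof.
rewrite kron1_form mxE mulr_suml; apply: eq_bigr => a _.
rewrite blk_zvec linearZ /= [(_ *: v)^T]linearZ /= -!scalemxAl !mxE.
by rewrite mulrA.
Qed.

Lemma tr11 (R : rcfType) (M : 'M[R]_1) : M^T 0 0 = M 0 0.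
Proof. by rewrite mxE. Qed.

Lemma add11 (R : rcfType) (M P : 'M[R]_1) : (M + P) 0 0 = M 0 0 + P 0 0.
Proof. by rewrite mxE. Qed.

Lemma bil_sym (R : rcfType) N (A : 'M[R]_N) (u w : 'cV[R]_N) : symmx A ->
  (u^T *m A *m w) 0 0 = (w^T *m A *m u) 0 0.
Proof.
by move=> sA; rewrite -tr11 !trmx_mul trmxK sA mulmxA.
Qed.

Lemma lin_sym (R : rcfType) N (u w : 'cV[R]_N) :
  (u^T *m w) 0 0 = (w^T *m u) 0 0.
Proof.
by rewrite -tr11 !trmx_mul trmxK.
Qed.

Lemma quad_add (R : rcfType) N (A : 'M[R]_N) b c (x z : 'cV[R]_N) : symmx A ->
  quad A b c (x + z) =
  quad A b c x + 2 * (z^T *m (A *m x + b)) 0 0 + (z^T *m A *m z) 0 0.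
Proof.
move=> sA; rewrite /quad [(x+z)^T]linearD /= !mulmxDl !mulmxDr !add11.
rewrite mulmxA (bil_sym x z sA) (lin_sym b z); ring.
Qed.

Lemma exists_eps (R : rcfType) k m (C : 'M[R]_(k, m)) : (m < k)%N ->
  exists e : 'rV[R]_k, e *m C = 0 /\ (e *m e^T) 0 0 = 1.
Proof.
move=> mk.
have rK : (0 < \rank (kermx C))%N.
  rewrite mxrank_ker subn_gt0; exact: leq_ltn_trans (rank_leq_col C) mk.
have : kermx C != 0 by rewrite -mxrank_eq0 -lt0n.
have [/forallP Hall|/forallPn [i Hi]] := boolP [forall i, row i (kermx C) == 0].
  move=> /eqP H; exfalso; apply: H; apply/row_matrixP => j; rewrite row0.
  exact/eqP/Hall.
move=> _; set u := row i (kermx C).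
have uC : u *m C = 0 by rewrite /u -row_mul mulmx_ker row0.
set s := (u *m u^T) 0 0.
have sE : s = \sum_a u 0 a ^+ 2.
  rewrite /s mxE; apply: eq_bigr => a _.
  by rewrite /u !mxE expr2.
have s0 : 0 <= s by rewrite sE sumr_ge0 // => a _; rewrite sqr_ge0.
have sn0 : s != 0.
  apply/negP => /eqP Hs; move: sE; rewrite Hs => /esym H.
  have H2 := psumr_eq0P (fun a _ => sqr_ge0 (u 0 a)) H.
  move: Hi; rewrite -/u => /negP; apply; apply/eqP/rowP => a.
  rewrite [RHS]mxE; apply/eqP; rewrite -sqrf_eq0; apply/eqP; exact: H2.
have sp : 0 < s by rewrite lt_def sn0 s0.
exists ((Num.sqrt s)^-1 *: u); split.
  by rewrite -scalemxAl uC scaler0.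
rewrite linearZ /= -scalemxAl -scalemxAr !mxE -/s.
rewrite mulrA -expr2 exprVn sqr_sqrtr //.
have -> : \sum_j u 0 j * u^T j 0 = s by rewrite /s mxE.
exact: mulVf.
Qed.

Lemma step (R : rcfType) k n m (A : 'I_m -> 'M[R]_(k * n)) (cA : 'I_m -> 'M[R]_n)
  (b : 'I_m -> 'cV[R]_(k * n)) (c : 'I_m -> R) (x : 'cV[R]_(k * n)) (v : 'cV[R]_n) :
  (m < k)%N -> (forall i, symmx (A i)) -> (forall i, A i = kron 1%:M (cA i)) ->
  exists z, forall i,
    quad (A i) (b i) (c i) (x + z) = quad (A i) (b i) (c i) x + (v^T *m cA i *m v) 0 0 /\
    quad (A i) (b i) (c i) (x - z) = quad (A i) (b i) (c i) x + (v^T *m cA i *m v) 0 0.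
Proof.
move=> mk sA hA.
pose C : 'M[R]_(k, m) := \matrix_(a, i) (v^T *m blk (A i *m x + b i) a) 0 0.
have [e [eC ee]] := exists_eps C mk.
exists (zvec e v) => i.
have L : ((zvec e v)^T *m (A i *m x + b i)) 0 0 = 0.
  rewrite zvec_lin.
  transitivity ((e *m C) 0 i); last by rewrite eC mxE.
  by rewrite [RHS]mxE; apply: eq_bigr => a _; rewrite [C _ _]mxE.
have Q : ((zvec e v)^T *m A i *m zvec e v) 0 0 = (v^T *m cA i *m v) 0 0.
  by rewrite hA zvec_quad ee mul1r.
split; first by rewrite quad_add // L Q mulr0 addr0.
rewrite quad_add // linearN /= !mulNmx mulmxN opprK.
by rewrite [X in 2 * X]mxE L Q oppr0 mulr0 addr0.
Qed.


Definition Rep (R : rcfType) N m (A : 'I_m -> 'M[R]_N) (b : 'I_m -> 'cV[R]_N)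
  (c : 'I_m -> R) (x : 'cV[R]_N) (val : 'I_m -> R) : Prop :=
  exists s : seq (R * 'cV[R]_N),
    (forall p, p \in s -> 0 <= p.1) /\ \sum_(p <- s) p.1 = 1 /\
    \sum_(p <- s) p.1 *: p.2 = x /\
    (forall p, p \in s -> forall i, quad (A i) (b i) (c i) p.2 = val i).

Lemma Rep_ext (R : rcfType) N m (A : 'I_m -> 'M[R]_N) b c x val val' :
  (forall i, val i = val' i) -> Rep A b c x val -> Rep A b c x val'.
Proof.
move=> E [s [H1 [H2 [H3 H4]]]]; exists s; do ![split=> //].
by move=> p ps i; rewrite -E H4.
Qed.

Lemma Rep_single (R : rcfType) N m (A : 'I_m -> 'M[R]_N) b c x :
  Rep A b c x (fun i => quad (A i) (b i) (c i) x).
Proof.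
exists [:: (1, x)]; split; first by move=> p; rewrite inE => /eqP -> /=.
split; first by rewrite big_seq1.
split; first by rewrite big_seq1 scale1r.
by move=> p; rewrite inE => /eqP ->.
Qed.

Lemma Rep_mid (R : rcfType) N m (A : 'I_m -> 'M[R]_N) b c x z val :
  Rep A b c (x + z) val -> Rep A b c (x - z) val -> Rep A b c x val.
Proof.
move=> [s1 [H1 [H2 [H3 H4]]]] [s2 [G1 [G2 [G3 G4]]]].
pose h := fun p : R * 'cV[R]_N => (p.1 / 2, p.2).
exists (map h s1 ++ map h s2); split.
  move=> p; rewrite mem_cat => /orP [] /mapP [q qs ->] /=.
    exact: divr_ge0 (H1 q qs) (ler0n _ 2).
  exact: divr_ge0 (G1 q qs) (ler0n _ 2).
split.
  rewrite big_cat !big_map /= -!mulr_suml H2 G2.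
  by rewrite -mulrDl -(natrD R 1 1) divff // pnatr_eq0.
split.
  rewrite big_cat !big_map /=.
  under eq_bigr => p _ do rewrite mulrC -scalerA.
  under [X in _ + X]eq_bigr => p _ do rewrite mulrC -scalerA.
  rewrite -!scaler_sumr H3 G3 -scalerDr addrACA subrr addr0 -mulr2n -scaler_nat.
  by rewrite scalerA mulVf ?scale1r // pnatr_eq0.
move=> p; rewrite mem_cat => /orP [] /mapP [q qs ->] /=.
  exact: H4.
exact: G4.
Qed.

Lemma Rep_seq (R : rcfType) k n m (A : 'I_m -> 'M[R]_(k * n)) (cA : 'I_m -> 'M[R]_n)
  (b : 'I_m -> 'cV[R]_(k * n)) (c : 'I_m -> R) :
  (m < k)%N -> (forall i, symmx (A i)) -> (forall i, A i = kron 1%:M (cA i)) ->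
  forall (vs : seq 'cV[R]_n) x,
  Rep A b c x (fun i => quad (A i) (b i) (c i) x + \sum_(v <- vs) (v^T *m cA i *m v) 0 0).
Proof.
move=> mk sA hA; elim=> [|v vs IH] x.
  by apply: Rep_ext (Rep_single A b c x) => i; rewrite big_nil addr0.
have [z Hz] := step b c x v mk sA hA.
apply: (@Rep_mid _ _ _ _ _ _ _ z).
  apply: Rep_ext (IH (x + z)) => i.
  by rewrite (proj1 (Hz i)) big_cons addrA.
apply: Rep_ext (IH (x - z)) => i.
by rewrite (proj2 (Hz i)) big_cons addrA.
Qed.

Lemma qf_add (R : rcfType) N (M : 'M[R]_N) (u w : 'cV[R]_N) : symmx M ->
  ((u + w)^T *m M *m (u + w)) 0 0 =
  (u^T *m M *m u) 0 0 + 2 * (w^T *m M *m u) 0 0 + (w^T *m M *m w) 0 0.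
Proof.
move=> sM; have := quad_add 0 0 u w sM; rewrite /quad !addr0 !linear0 !mul0mx.
by rewrite [(0 : 'M_(1,1)) 0 0]mxE !mulr0 !addr0 mulmxA.
Qed.

Lemma qf_scale (R : rcfType) N (M : 'M[R]_N) (u w : 'cV[R]_N) t :
  ((t *: w)^T *m M *m u) 0 0 = t * (w^T *m M *m u) 0 0.
Proof. by rewrite linearZ /= -!scalemxAl mxE. Qed.

Lemma qf_scaler (R : rcfType) N (M : 'M[R]_N) (u w : 'cV[R]_N) t :
  (w^T *m M *m (t *: u)) 0 0 = t * (w^T *m M *m u) 0 0.
Proof. by rewrite -scalemxAr mxE. Qed.

Lemma qf_delta (R : rcfType) N (M : 'M[R]_N) i j :
  ((delta_mx i 0 : 'cV[R]_N)^T *m M *m (delta_mx j 0 : 'cV[R]_N)) 0 0 = M i j.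
Proof. by rewrite trmx_delta -rowE -colE !mxE. Qed.

Lemma sym_entry (R : rcfType) N (M : 'M[R]_N) i j : symmx M -> M j i = M i j.
Proof. by move=> sM; rewrite -[in LHS]sM mxE. Qed.

Lemma psd_zero (R : rcfType) N (M : 'M[R]_N) :
  psd M -> (forall j, M j j = 0) -> M = 0.
Proof.
move=> [sM pM] d0; apply/matrixP => i j; rewrite mxE.
set t := - M i j.
have := pM ((delta_mx i 0 : 'cV[R]_N) + t *: (delta_mx j 0 : 'cV[R]_N)).
rewrite qf_add // qf_scale qf_scaler qf_scale !qf_delta !d0 (sym_entry _ _ sM).
rewrite /t => H; apply/eqP; rewrite -sqrf_eq0 eq_le sqr_ge0 andbT.
lra.
Qed.

Lemma prod11 (R : rcfType) (P Q : 'M[R]_1) : (P *m Q) 0 0 = P 0 0 * Q 0 0.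
Proof. by rewrite mxE big_ord1. Qed.

Lemma subE (R : rcfType) m n (P Q : 'M[R]_(m, n)) i j : (P - Q) i j = P i j - Q i j.
Proof. by rewrite !mxE. Qed.

Lemma psd_decomp (R : rcfType) N (M : 'M[R]_N) :
  psd M -> exists ys : seq 'cV[R]_N, M = \sum_(y <- ys) y *m y^T.
Proof.
have [p] := ubnP #|[pred j | M j j != 0]|; elim: p M => // p IH M.
rewrite ltnS => Hp [sM pM].
have [/forallP Hall|/forallPn [j Hj]] := boolP [forall j, M j j == 0].
  exists [::]; rewrite big_nil; apply: psd_zero => // j; exact/eqP/Hall.
set g := M j j.
have g0 : 0 < g.
  by rewrite lt_def Hj /= /g -(qf_delta M j j); apply: pM.
have gn0 : g != 0 by rewrite gt_eqF.
set u := (Num.sqrt g)^-1 *: col j M.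
set M' := M - u *m u^T.
have uE : forall i, u i 0 = (Num.sqrt g)^-1 * M i j by move=> i; rewrite !mxE.
have sq : (Num.sqrt g)^-1 ^+ 2 = g^-1 by rewrite exprVn sqr_sqrtr // ltW.
have M'E : forall i, M' i i = M i i - M i j ^+ 2 / g.
  move=> i; rewrite /M' !mxE big_ord1 !mxE.
  by rewrite mulrACA -expr2 sq mulrC expr2.
have sM' : symmx M'.
  by rewrite /symmx /M' linearB /= trmx_mul trmxK sM.
have pM' : psd M'.
  split=> // v.
  pose beta := (v^T *m M *m (delta_mx j 0 : 'cV[R]_N)) 0 0.
  have vu : (v^T *m u) 0 0 = (Num.sqrt g)^-1 * beta.
    by rewrite /u -scalemxAr mxE colE mulmxA.
  have FE : (v^T *m M' *m v) 0 0 = (v^T *m M *m v) 0 0 - beta ^+ 2 / g.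
    rewrite /M' mulmxBr mulmxBl subE !mulmxA -(mulmxA (v^T *m u)).
    rewrite prod11 (lin_sym u v) vu -expr2 exprMn sq mulrC.
    done.
  set t := - (beta / g).
  have := pM (v + t *: (delta_mx j 0 : 'cV[R]_N)).
  rewrite qf_add // qf_scale qf_scaler qf_scale qf_delta -/g.
  rewrite (bil_sym _ v sM) -/beta FE.
  suff -> : (v^T *m M *m v) 0 0 + 2 * (t * beta) + t * (t * g) =
            (v^T *m M *m v) 0 0 - beta ^+ 2 / g by [].
  rewrite /t; field; exact: gn0.
have prop : [pred i | M' i i != 0] \proper [pred i | M i i != 0].
  apply/properP; split.
    apply/subsetP => i; rewrite !inE; apply: contraNN => /eqP Mii.
    have := proj2 pM' (delta_mx i 0); rewrite qf_delta => H0.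
    have Hle : M' i i <= 0.
      by rewrite (M'E i) Mii sub0r oppr_le0 divr_ge0 ?sqr_ge0 // ltW.
    by apply/eqP; apply: le_anti; apply/andP; split; [exact: Hle|exact: H0].
  exists j; rewrite !inE //= negbK; apply/eqP.
  have E := M'E j; apply: etrans E _.
  by rewrite -/g expr2 mulrK ?unitfE //; apply: subrr.
have [ys Hys] := IH M' (leq_trans (proper_card prop) Hp) pM'.
exists (u :: ys); rewrite big_cons -Hys /M'.
by rewrite addrC subrK.
Qed.

Lemma tr1 (R : rcfType) (M : 'M[R]_1) : \tr M = M 0 0.
Proof. by rewrite /mxtrace big_ord1. Qed.

Lemma frob_formula (R : rcfType) N (A : 'M[R]_N) b c x X : symmx A ->
  frob (Qmat A b c) (Ymat x X) = c + 2 * (b^T *m x) 0 0 + \tr (A *m X).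
Proof.
move=> sA; rewrite /frob /Qmat /Ymat tr_block_mx trmxK tr_scalar_mx sA.
rewrite mulmx_block mxtrace_block !mxtraceD mulmx1 !tr1 mxtrace_mulC tr1.
rewrite (lin_sym x b) mxE eqxx mulr1n; ring.
Qed.

Lemma tr_qf (R : rcfType) N (A : 'M[R]_N) (x : 'cV[R]_N) :
  \tr (A *m (x *m x^T)) = (x^T *m A *m x) 0 0.
Proof. by rewrite mulmxA mxtrace_mulC tr1 mulmxA. Qed.

Lemma Ymat_psd_schur (R : rcfType) N (x : 'cV[R]_N) X :
  symmx X -> psd (Ymat x X) -> psd (X - x *m x^T).
Proof.
move=> sX [_ pY]; split.
  by rewrite /symmx linearB /= trmx_mul trmxK sX.
move=> w; have := pY (col_mx (- (x^T *m w)) w).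
rewrite /Ymat tr_col_mx mul_row_block mul_row_col.
rewrite mulmx1 [(- _)^T]linearN /= trmx_mul trmxK addNr mul0mx add0r.
by rewrite mulmxDl mulNmx mulmxBr mulmxBl !mulmxA mulNmx addrC.
Qed.

Lemma block_sum (R : rcfType) p m1 m2 n1 n2 (a : 'I_p -> 'M[R]_(m1, n1))
  (b : 'I_p -> 'M[R]_(m1, n2)) (c : 'I_p -> 'M[R]_(m2, n1)) (d : 'I_p -> 'M[R]_(m2, n2)) :
  \sum_j block_mx (a j) (b j) (c j) (d j) =
  block_mx (\sum_j a j) (\sum_j b j) (\sum_j c j) (\sum_j d j).
Proof.
elim: p a b c d => [|p IH] a b c d; first by rewrite !big_ord0 block_mx0.
rewrite !big_ord_recr /= IH; exact: add_block_mx.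
Qed.

Lemma Ymat_comb (R : rcfType) N p (l : 'I_p -> R) (xs : 'I_p -> 'cV[R]_N) :
  \sum_j l j = 1 ->
  \sum_j l j *: Ymat (xs j) (xs j *m (xs j)^T) =
  Ymat (\sum_j l j *: xs j) (\sum_j l j *: (xs j *m (xs j)^T)).
Proof.
move=> l1; rewrite /Ymat.
under eq_bigr => j _ do rewrite scale_block_mx.
rewrite block_sum -scaler_suml l1 scale1r linear_sum /=.
by congr block_mx; apply: eq_bigr => j _; rewrite linearZ.
Qed.

Lemma Ymat_rank1 (R : rcfType) N (y : 'cV[R]_N) :
  Ymat y (y *m y^T) = col_mx 1%:M y *m (col_mx 1%:M y)^T.
Proof.
by rewrite tr_col_mx mul_col_row tr_scalar_mx !mul1mx mulmx1.
Qed.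

Lemma psd_gram (R : rcfType) M (g : 'cV[R]_M) : psd (g *m g^T).
Proof.
split; first by rewrite /symmx trmx_mul trmxK.
move=> v; rewrite mulmxA -(mulmxA (v^T *m g)) prod11 (lin_sym g v).
by rewrite -expr2 sqr_ge0.
Qed.

Lemma psd_comb (R : rcfType) M p (l : 'I_p -> R) (Ms : 'I_p -> 'M[R]_M) :
  (forall j, 0 <= l j) -> (forall j, psd (Ms j)) -> psd (\sum_j l j *: Ms j).
Proof.
move=> l0 pM; split.
  rewrite /symmx linear_sum /=; apply: eq_bigr => j _.
  by rewrite linearZ /= (proj1 (pM j)).
move=> v; rewrite mulmx_sumr mulmx_suml summxE sumr_ge0 // => j _.
by rewrite -scalemxAr -scalemxAl mxE mulr_ge0 // (proj2 (pM j)).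
Qed.

Lemma frob_lin (R : rcfType) M p (Q : 'M[R]_M) (l : 'I_p -> R) (Ys : 'I_p -> 'M[R]_M) :
  frob Q (\sum_j l j *: Ys j) = \sum_j l j * frob Q (Ys j).
Proof.
rewrite /frob mulmx_sumr raddf_sum /=; apply: eq_bigr => j _.
by rewrite -scalemxAr mxtraceZ.
Qed.

Unset Implicit Arguments. Set Strict Implicit. Set Printing Implicit Defensive.

Theorem mainTheorem19 (R : rcfType) (N mI mE : nat)
  (A : 'I_(mI + mE).+1 -> 'M[R]_N) (b : 'I_(mI + mE).+1 -> 'cV[R]_N)
  (c : 'I_(mI + mE).+1 -> R) (k : nat) :
  (1 <= N)%N -> (1 <= mI + mE)%N ->
  (forall i, symmx (A i)) ->
  assumptionA mI A b c ->
  qe_mult A k ->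
  (mI + mE + 2 <= k)%N ->
  forall (x : 'cV[R]_N) (t : R),
    convhull (D_QCQP mI A b c) x t <-> D_SDP mI A b c x t.
Proof.
move=> N1 m1 sA _ [hk _] km x t; split.
  move=> [p [l [xs [ts [l0 [l1 [HD [-> ->]]]]]]]].
  exists (\sum_j l j *: (xs j *m (xs j)^T)).
  rewrite -(Ymat_comb xs l1).
  have frobE : forall i, frob (Qmat (A i) (b i) (c i))
      (\sum_j l j *: Ymat (xs j) (xs j *m (xs j)^T)) =
      \sum_j l j * quad (A i) (b i) (c i) (xs j).
    move=> i; rewrite frob_lin; apply: eq_bigr => j _.
    by rewrite frob_formula // tr_qf /quad; congr (_ * _); ring.
  split.
    rewrite /symmx linear_sum /=; apply: eq_bigr => j _.
    by rewrite linearZ /= (proj1 (psd_gram (xs j))).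
  split.
    by apply: psd_comb => // j; rewrite Ymat_rank1; apply: psd_gram.
  split.
    rewrite frobE mulr_sumr; apply: ler_sum => j _.
    by rewrite mulrCA ler_wpM2l // (proj1 (HD j)).
  split.
    move=> i Hi; rewrite frobE.
    rewrite -oppr_ge0 -sumrN sumr_ge0 // => j _.
    by rewrite -mulrN mulr_ge0 // oppr_ge0 (proj1 (proj2 (HD j))).
  move=> i Hi; rewrite frobE big1 // => j _.
  by rewrite (proj2 (proj2 (HD j))) // mulr0.
move=> [X [sX [pY [H0 [HI HE]]]]].
have [n [e [cA HcA]]] := hk.
subst N.
have hA : forall i, A i = kron 1%:M (cA i).
  by move=> i; rewrite (proj2 (HcA i)) castmx_id.
have [ys Hys] := psd_decomp (Ymat_psd_schur sX pY).
pose vs := flatten [seq [seq blk y a | a <- index_enum 'I_k] | y <- ys].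
have valE : forall i, frob (Qmat (A i) (b i) (c i)) (Ymat x X) =
    quad (A i) (b i) (c i) x + \sum_(v <- vs) (v^T *m cA i *m v) 0 0.
  move=> i; rewrite frob_formula //.
  have -> : X = x *m x^T + (X - x *m x^T) by rewrite addrC subrK.
  rewrite mulmxDr mxtraceD tr_qf Hys mulmx_sumr raddf_sum /= big_flatten /= big_map.
  rewrite /quad.
  have -> : \sum_(y <- ys) \tr (A i *m (y *m y^T)) =
     \sum_(y <- ys) \sum_(v <- [seq blk y a | a <- index_enum 'I_k]) (v^T *m cA i *m v) 0 0.
    by apply: eq_bigr => y _; rewrite tr_qf hA kron1_form big_map.
  ring.
have mk : ((mI + mE).+1 < k)%N by rewrite -addn2.
have [s [s0 [s1 [sx sq]]]] := Rep_seq b c mk sA hA vs x.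
have l1 : \sum_(j < size s) (nth (0, 0) s j).1 = 1 by rewrite -s1 (big_nth (0, 0)) big_mkord.
exists (size s), (fun j => (nth (0, 0) s j).1), (fun j => (nth (0, 0) s j).2), (fun _ => t).
split; first by move=> j; apply: s0; exact: mem_nth.
split; first exact: l1.
split.
  move=> j; have Hq := sq _ (mem_nth (0, 0) (ltn_ord j)).
  split; first by rewrite Hq -valE.
  by split=> i Hi; rewrite Hq -valE; [exact: HI|exact: HE].
split; first by rewrite -{1}sx (big_nth (0, 0)) big_mkord.
by rewrite -mulr_suml l1 mul1r.
Qed.
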